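(* There exist $\delta_0>0$, $\varepsilon_1>0$ and $C>0$ such that for all $\delta\in(0,\delta_0]$, $\varepsilon\in(0,\varepsilon_1]$, all initial conditions with $h^\delta_\varepsilon(0)\in\mathcal V$, and all $0\le\mathcal T'\le\mathcal T\le (T\wedge T^\delta_\varepsilon)/\varepsilon$, \[ \Bigl|\int_{\mathcal T'}^{\mathcal T}H^\delta(z^\delta_\varepsilon(s))\,ds\Bigr|\le C\,\bigl(1\vee(\mathcal T-\mathcal T')\bigr). \]
   Context: Let $\kappa:\mathbb R\to\mathbb R$ be $\mathcal C^2$ with $\kappa(x)=0$ for $x\ge1$ and $\kappa'(x)<0$ for $x<1$; $\kappa_\delta(x)=\kappa(x/\delta)$. Soft core system with $n_1=n_2=1$: Hamiltonian $\frac{MV^2}{2}+\frac{m_1v_1^2}{2}+\frac{m_2v_2^2}{2}+\kappa_\delta(x_1)+\kappa_\delta(X-x_1)+\kappa_\delta(x_2-X)+\kappa_\delta(1-x_2)$ (piston at $X$, gas particles of masses $m_1,m_2$ at $x_1<X<x_2$), with $\varepsilon=M^{-1/2}$, $W=V/\varepsilon$. Energies $E_1=\frac12m_1v_1^2+\kappa_\delta(x_1)+\kappa_\delta(X-x_1)$, $E_2=\frac12m_2v_2^2+\kappa_\delta(x_2-X)+\kappa_\delta(1-x_2)$; slow variables $h=(X,W,E_1,E_2)$. $z^\delta_\varepsilon(t)$ denotes the phase point at time $t$ and $h^\delta_\varepsilon(t)$ its slow variables. Define $H^\delta(z)=\bigl(W,\ -\kappa'_\delta(X-x_1)+\kappa'_\delta(x_2-X),\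 W\kappa'_\delta(X-x_1),\ -W\kappa'_\delta(x_2-X)\bigr)$, so that $dh^\delta_\varepsilon/dt=\varepsilon H^\delta(z^\delta_\varepsilon)$. Periods: for $\delta>0$, $a=\delta\kappa^{-1}(E)$ ($\kappa^{-1}$ the inverse of $\kappa|_{[0,1]}$), $T_1(X,E,\delta)=2\int_a^{X-a}\sqrt{\frac{m_1/2}{E-\kappa_\delta(s)-\kappa_\delta(X-s)}}ds$, $T_2(X,E,\delta)=2\int_{X+a}^{1-a}\sqrt{\frac{m_2/2}{E-\kappa_\delta(s-X)-\kappa_\delta(1-s)}}ds$. Averaged field $\bar H^\delta(h)=\bigl(W,\ \tfrac{\sqrt{8m_1E_1}}{T_1}-\tfrac{\sqrt{8m_2E_2}}{T_2},\ -W\tfrac{\sqrt{8m_1E_1}}{T_1},\ W\tfrac{\sqrt{8m_2E_2}}{T_2}\bigr)$ with $T_i=T_i(X,E_i,\delta)$; $\bar h^\delta$ solves $d\bar h^\delta/d\tau=\bar H^\delta(\bar h^\delta)$, $\bar h^\delta(0)=h^\delta_\varepsilon(0)$. $\mathcal V\subset\mathbb R^4$ is compact with $h\in\mathcal V\Rightarrow X\in A,W\in B,E_i\in C$ for compact $A\subset(0,1)$, $B\subset\mathbb R$, $C\subset(0,\kappa(0))$. $T>0$ is fixed and $T^\delta_\varepsilon=\inf\{\tau\ge0:\bar h^\delta(\tau)\notin\mathcal V\text{ or }h^\delta_\varepsilon(\tau/\varepsilon)\notin\mathcal V\}$. *)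

(* Defs.v *)
From Stdlib Require Import Reals Lra ClassicalEpsilon.
From Coquelicot Require Import Coquelicot.
Open Scope R_scope.

Definition kdelta (kappa : R -> R) (delta x : R) : R := kappa (x / delta).
Definition dkdelta (kappa : R -> R) (delta x : R) : R := Derive (kdelta kappa delta) x.

Definition C2 (f : R -> R) : Prop :=
  forall x, ex_derive f x /\ ex_derive (Derive f) x /\ continuous (Derive (Derive f)) x.

Definition kappa_inv (kappa : R -> R) (E : R) : R :=
  epsilon (inhabits 0) (fun y => 0 <= y <= 1 /\ kappa y = E).

(* Periods T_1, T_2 (improper integrals) *)
Definition T1 (kappa : R -> R) (m1 X E delta : R) : R :=
  let a := delta * kappa_inv kappa E in
  2 * RInt_gen
        (fun s => sqrt ((m1 / 2) / (E - kdelta kappa delta s - kdelta kappa delta (X - s))))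
        (at_right a) (at_left (X - a)).

Definition T2 (kappa : R -> R) (m2 X E delta : R) : R :=
  let a := delta * kappa_inv kappa E in
  2 * RInt_gen
        (fun s => sqrt ((m2 / 2) / (E - kdelta kappa delta (s - X) - kdelta kappa delta (1 - s))))
        (at_right (X + a)) (at_left (1 - a)).

Definition slow (kappa : R -> R) (m1 m2 eps delta : R) (X V x1 v1 x2 v2 : R)
  : R * R * R * R :=
  (X, V / eps,
   m1 * v1 ^ 2 / 2 + kdelta kappa delta x1 + kdelta kappa delta (X - x1),
   m2 * v2 ^ 2 / 2 + kdelta kappa delta (x2 - X) + kdelta kappa delta (1 - x2)).

Definition Hdelta (kappa : R -> R) (eps delta : R) (X V x1 v1 x2 v2 : R)
  : R * R * R * R :=
  let W := V / eps in
  (W,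
   - dkdelta kappa delta (X - x1) + dkdelta kappa delta (x2 - X),
   W * dkdelta kappa delta (X - x1),
   - W * dkdelta kappa delta (x2 - X)).

Definition Hbar (kappa : R -> R) (m1 m2 delta : R) (h : R * R * R * R) : R * R * R * R :=
  let '(X, W, E1, E2) := h in
  let f1 := sqrt (8 * m1 * E1) / T1 kappa m1 X E1 delta in
  let f2 := sqrt (8 * m2 * E2) / T2 kappa m2 X E2 delta in
  (W, f1 - f2, - W * f1, W * f2).

(* Hamilton's equations for the Hamiltonian
   M V^2/2 + m1 v1^2/2 + m2 v2^2/2 + k_d(x1) + k_d(X-x1) + k_d(x2-X) + k_d(1-x2) *)
Definition is_trajectory (kappa : R -> R) (m1 m2 M delta : R)
  (Xf Vf x1f v1f x2f v2f : R -> R) : Prop :=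
  forall t,
    is_derive Xf t (Vf t) /\
    is_derive Vf t ((- dkdelta kappa delta (Xf t - x1f t)
                     + dkdelta kappa delta (x2f t - Xf t)) / M) /\
    is_derive x1f t (v1f t) /\
    is_derive v1f t ((- dkdelta kappa delta (x1f t)
                      + dkdelta kappa delta (Xf t - x1f t)) / m1) /\
    is_derive x2f t (v2f t) /\
    is_derive v2f t ((- dkdelta kappa delta (x2f t - Xf t)
                      + dkdelta kappa delta (1 - x2f t)) / m2).

Definition pr1 (h : R * R * R * R) : R := fst (fst (fst h)).
Definition pr2 (h : R * R * R * R) : R := snd (fst (fst h)).
Definition pr3 (h : R * R * R * R) : R := snd (fst h).
Definition pr4 (h : R * R * R * R) : R := snd h.

(* Main.v *)
Require Import Defs.
From Stdlib Require Import Reals Lra.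
From Coquelicot Require Import Coquelicot.
Open Scope R_scope.

Lemma exd_cont (f:R->R) x : ex_derive f x -> continuous f x.
Proof. intros H. apply continuity_pt_filterlim. apply derivable_continuous_pt. apply ex_derive_Reals_0. exact H. Qed.

Lemma dk_eq kappa (Hk2 : C2 kappa) d x : 0 < d ->
  dkdelta kappa d x = / d * Derive kappa (x / d).
Proof.
  intros Hd. unfold dkdelta, kdelta. apply is_derive_unique.
  assert (H1 : is_derive kappa (x/d) (Derive kappa (x/d))).
  { apply Derive_correct. apply (Hk2 (x/d)). }
  assert (H2 : is_derive (fun x => x / d) x (/ d)).
  { auto_derive; auto. field. lra. }
  pose proof (is_derive_comp kappa (fun x => x/d) x _ _ H1 H2) as H3.
  exact H3.
Qed.

Lemma kd_zero kappa (Hk0 : forall x, 1 <= x -> kappa x = 0) y : 1 < y -> Derive kappa y = 0.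
Proof.
  intros Hy. rewrite (Derive_ext_loc kappa (fun _ => 0)).
  - apply Derive_const.
  - exists (mkposreal (y - 1) ltac:(lra)). intros z Hz. apply Hk0.
    unfold ball in Hz; simpl in Hz; unfold AbsRing_ball, abs, minus, plus, opp in Hz; simpl in Hz.
    apply Rabs_def2 in Hz. simpl in Hz. lra.
Qed.

Lemma kd_nonpos kappa (Hk2 : C2 kappa) (Hk0 : forall x, 1 <= x -> kappa x = 0)
  (Hk' : forall x, x < 1 -> Derive kappa x < 0) y : Derive kappa y <= 0.
Proof.
  destruct (Rlt_or_le y 1) as [H|H]. { left; auto. }
  destruct H as [H|H]. { rewrite kd_zero; auto; lra. }
  subst y. destruct (Rle_or_lt (Derive kappa 1) 0) as [H|H]; auto.
  exfalso.
  assert (Hc : continuous (Derive kappa) 1) by (apply exd_cont; apply (Hk2 1)).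
  apply filterlim_locally with (eps := mkposreal _ H) in Hc.
  destruct Hc as [e He].
  specialize (He (1 - e/2)).
  assert (Hb : ball 1 e (1 - e/2)).
  { unfold ball; simpl; unfold AbsRing_ball, abs, minus, plus, opp; simpl.
    destruct e as [e ep]; simpl. rewrite Rabs_left; lra. }
  specialize (He Hb).
  unfold ball in He; simpl in He; unfold AbsRing_ball, abs, minus, plus, opp in He; simpl in He.
  apply Rabs_def2 in He.
  pose proof (Hk' (1 - e/2)). destruct e as [e ep]; simpl in *. lra.
Qed.

Lemma k_mono kappa (Hk2 : C2 kappa) (Hk0 : forall x, 1 <= x -> kappa x = 0)
  (Hk' : forall x, x < 1 -> Derive kappa x < 0) x y : x <= y -> kappa y <= kappa x.
Proof.
  intros Hxy.
  destruct (MVT_gen kappa x y (Derive kappa)) as [c [Hc1 Hc2]].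
  - intros z _. apply Derive_correct. apply (Hk2 z).
  - intros z _. apply continuity_pt_filterlim. apply exd_cont. apply (Hk2 z).
  - pose proof (kd_nonpos kappa Hk2 Hk0 Hk' c). nra.
Qed.

Lemma k_nonneg kappa (Hk2 : C2 kappa) (Hk0 : forall x, 1 <= x -> kappa x = 0)
  (Hk' : forall x, x < 1 -> Derive kappa x < 0) y : 0 <= kappa y.
Proof.
  destruct (Rle_or_lt y 1).
  - rewrite <- (Hk0 1) by lra. apply k_mono; auto.
  - rewrite Hk0; lra.
Qed.

Lemma ext_le (g : R -> R) t0 t c : continuous g t -> t0 < t ->
  (forall s, t0 <= s < t -> g s <= c) -> g t <= c.
Proof.
  intros Hc Ht H. destruct (Rle_or_lt (g t) c) as [|Hg]; auto. exfalso.
  assert (He : 0 < g t - c) by lra.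
  apply filterlim_locally with (eps := mkposreal _ He) in Hc.
  destruct Hc as [e Hb].
  set (s := Rmax t0 (t - e/2)).
  assert (Hs : t0 <= s < t).
  { unfold s. destruct e as [e ep]; simpl. split. apply Rmax_l. apply Rmax_lub_lt; lra. }
  assert (Hb' : ball t e s).
  { unfold ball; simpl; unfold AbsRing_ball, abs, minus, plus, opp; simpl.
    rewrite Rabs_left by lra. unfold s. destruct e as [e ep]; simpl.
    pose proof (Rmax_r t0 (t - e/2)). lra. }
  specialize (Hb s Hb').
  unfold ball in Hb; simpl in Hb; unfold AbsRing_ball, abs, minus, plus, opp in Hb; simpl in Hb.
  apply Rabs_def2 in Hb. specialize (H s Hs). simpl in Hb. lra.
Qed.

Lemma exR (f : R -> R) a b : (forall t, continuous f t) -> ex_RInt f a b.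
Proof. intros H. apply (@ex_RInt_continuous R_CompleteNormedModule). intros; apply H. Qed.

Lemma core (p y yd Fp Fw : R -> R) (t0 t1 a d P Y Km : R) :
  t0 <= t1 -> 0 < d -> 4 * d <= a ->
  (forall t, continuous Fp t) -> (forall t, continuous Fw t) ->
  (forall t, continuous p t) -> (forall t, continuous y t) -> (forall t, continuous yd t) ->
  (forall t, is_derive p t (Fw t - Fp t)) -> (forall t, is_derive y t (yd t)) ->
  (forall t, t0 <= t <= t1 -> 0 <= Fp t /\ 0 <= Fw t /\ (Fp t <> 0 -> a - d <= y t) /\
        (Fw t <> 0 -> y t <= d) /\ Rabs (p t) <= P /\ Rabs (y t) <= Y /\ p t * yd t <= Km) ->
  0 <= RInt Fp t0 t1 /\ (a/2) * RInt Fp t0 t1 <= Km*(t1-t0) + 2*d*P + 2*P*Y.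
Proof.
  intros Ht Hd Had cFp cFw cp cy cyd Dp Dy Hpt.
  assert (cyFp : forall t, continuous (fun t => y t * Fp t) t).
  { intros t; apply (continuous_mult y Fp); auto. }
  assert (cyFw : forall t, continuous (fun t => y t * Fw t) t).
  { intros t; apply (continuous_mult y Fw); auto. }
  assert (cK : forall t, continuous (fun t => p t * yd t) t).
  { intros t; apply (continuous_mult p yd); auto. }
  assert (cD : forall t, continuous (fun t => Fw t - Fp t) t).
  { intros t; apply (continuous_minus Fw Fp); auto. }
  assert (cE : forall t, continuous (fun t => (Fw t - Fp t) * y t + p t * yd t) t).
  { intros t; apply (continuous_plus (fun t => (Fw t - Fp t) * y t)).
    apply (continuous_mult (fun t => Fw t - Fp t) y); auto. auto. }
  set (Ip := RInt Fp t0 t1). set (Iw := RInt Fw t0 t1).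
  set (IyP := RInt (fun t => y t * Fp t) t0 t1).
  set (IyW := RInt (fun t => y t * Fw t) t0 t1).
  set (IK := RInt (fun t => p t * yd t) t0 t1).
  assert (E1 : Iw - Ip = p t1 - p t0).
  { assert (H1 : is_RInt (fun t => Fw t - Fp t) t0 t1 (p t1 - p t0)).
    { apply (@is_RInt_derive R_CompleteNormedModule p (fun t => Fw t - Fp t)); intros; auto. }
    assert (H2 : is_RInt (fun t => Fw t - Fp t) t0 t1 (Iw - Ip)).
    { apply (@is_RInt_minus R_NormedModule Fw Fp); apply (@RInt_correct R_CompleteNormedModule); apply exR; auto. }
    rewrite <- (@is_RInt_unique R_CompleteNormedModule _ _ _ _ H1). rewrite (@is_RInt_unique R_CompleteNormedModule _ _ _ _ H2). auto. }
  assert (E2 : IyW - IyP + IK = p t1 * y t1 - p t0 * y t0).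
  { assert (H1 : is_RInt (fun t => (Fw t - Fp t) * y t + p t * yd t) t0 t1 (p t1 * y t1 - p t0 * y t0)).
    { apply (@is_RInt_derive R_CompleteNormedModule (fun t => p t * y t) (fun t => (Fw t - Fp t) * y t + p t * yd t)); intros; auto.
      apply (is_derive_mult p y); auto. intros; apply Rmult_comm. }
    assert (H2 : is_RInt (fun t => (Fw t - Fp t) * y t + p t * yd t) t0 t1 (IyW - IyP + IK)).
    { apply (@is_RInt_ext R_NormedModule) with (f := fun t => plus (minus (y t * Fw t) (y t * Fp t)) (p t * yd t)).
      { intros; unfold minus, opp; simpl; unfold plus; simpl. ring. }
      apply (@is_RInt_plus R_NormedModule). apply (@is_RInt_minus R_NormedModule).
      all: apply (@RInt_correct R_CompleteNormedModule); apply exR; auto. }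
    rewrite <- (@is_RInt_unique R_CompleteNormedModule _ _ _ _ H1). rewrite (@is_RInt_unique R_CompleteNormedModule _ _ _ _ H2). auto. }
  assert (I1 : (a - d) * Ip <= IyP).
  { unfold Ip, IyP. change ((a - d) * RInt Fp t0 t1) with (scal (a - d) (RInt Fp t0 t1)).
    rewrite <- (@RInt_scal R_CompleteNormedModule) by (apply exR; auto).
    apply RInt_le; auto.
    - apply (@ex_RInt_scal R_NormedModule); apply exR; auto.
    - apply exR; auto.
    - intros t Htt. destruct (Hpt t ltac:(lra)) as (h1 & h2 & h3 & h4 & _).
      unfold scal; simpl; unfold mult; simpl.
      destruct (Req_dec (Fp t) 0) as [e|e]. rewrite e; lra. specialize (h3 e). nra. }
  assert (I2 : IyW <= d * Iw).
  { unfold Iw, IyW. change (d * RInt Fw t0 t1) with (scal d (RInt Fw t0 t1)).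
    rewrite <- (@RInt_scal R_CompleteNormedModule) by (apply exR; auto).
    apply RInt_le; auto.
    - apply exR; auto.
    - apply (@ex_RInt_scal R_NormedModule); apply exR; auto.
    - intros t Htt. destruct (Hpt t ltac:(lra)) as (h1 & h2 & h3 & h4 & _).
      unfold scal; simpl; unfold mult; simpl.
      destruct (Req_dec (Fw t) 0) as [e|e]. rewrite e; lra. specialize (h4 e). nra. }
  assert (I3 : IK <= Km * (t1 - t0)).
  { unfold IK. assert (HC : RInt (fun _ => Km) t0 t1 = Km * (t1 - t0)).
    { rewrite RInt_const. unfold scal; simpl; unfold mult; simpl; ring. }
    rewrite <- HC. 
    apply RInt_le; auto. apply exR; auto. apply (@ex_RInt_const R_NormedModule).
    intros t Htt. destruct (Hpt t ltac:(lra)) as (_ & _ & _ & _ & _ & _ & h). exact h. }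
  assert (I4 : 0 <= Ip).
  { unfold Ip. assert (HC : RInt (fun _ => 0) t0 t1 = 0).
    { rewrite RInt_const. unfold scal; simpl; unfold mult; simpl; ring. }
    rewrite <- HC.
    apply RInt_le; auto. apply (@ex_RInt_const R_NormedModule). apply exR; auto.
    intros t Htt. destruct (Hpt t ltac:(lra)) as (h & _). exact h. }
  destruct (Hpt t0 ltac:(lra)) as (_ & _ & _ & _ & p0 & y0 & _).
  destruct (Hpt t1 ltac:(lra)) as (_ & _ & _ & _ & p1 & y1 & _).
  assert (B1 : Rabs (p t1 - p t0) <= 2 * P).
  { eapply Rle_trans. apply Rabs_triang. rewrite Rabs_Ropp. lra. }
  assert (B2 : Rabs (p t1 * y t1 - p t0 * y t0) <= 2 * P * Y).
  { eapply Rle_trans. apply Rabs_triang. rewrite Rabs_Ropp, !Rabs_mult.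
    pose proof (Rabs_pos (p t1)); pose proof (Rabs_pos (y t1));
    pose proof (Rabs_pos (p t0)); pose proof (Rabs_pos (y t0)). nra. }
  apply Rabs_le_between in B1; apply Rabs_le_between in B2.
  split; auto.
  unfold scal in I3; simpl in I3; unfold mult in I3; simpl in I3.
  nra.
Qed.

Lemma der_scale (f : R->R) k x df v : is_derive f x df -> v = k*df -> is_derive (fun s => k * f s) x v.
Proof. intros H ->. apply is_derive_scal. exact H. Qed.

Lemma kpos_arg kappa (Hk2 : C2 kappa) (Hk0 : forall x, 1 <= x -> kappa x = 0)
  (Hk' : forall x, x < 1 -> Derive kappa x < 0) y : kappa y < kappa 0 -> 0 < y.
Proof.
  intros H. destruct (Rlt_or_le 0 y); auto.
  pose proof (k_mono kappa Hk2 Hk0 Hk' y 0 H0). lra.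
Qed.

Lemma dk_cont kappa (Hk2 : C2 kappa) d (g : R -> R) t : 0 < d ->
  (forall t, ex_derive g t) -> continuous (fun s => dkdelta kappa d (g s)) t.
Proof.
  intros Hd Hg.
  apply (continuous_ext (fun s => / d * Derive kappa (g s / d))).
  { intros s. rewrite dk_eq; auto. }
  apply exd_cont. auto_derive. repeat split; auto. apply (Hk2 _).
Qed.

Lemma dk_nonpos kappa (Hk2 : C2 kappa) (Hk0 : forall x, 1 <= x -> kappa x = 0)
  (Hk' : forall x, x < 1 -> Derive kappa x < 0) d x : 0 < d -> dkdelta kappa d x <= 0.
Proof.
  intros Hd. rewrite dk_eq; auto. pose proof (kd_nonpos kappa Hk2 Hk0 Hk' (x/d)).
  pose proof (Rinv_0_lt_compat d Hd). nra.
Qed.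

Lemma dk_supp kappa (Hk2 : C2 kappa) (Hk0 : forall x, 1 <= x -> kappa x = 0)
  d x : 0 < d -> dkdelta kappa d x <> 0 -> x <= d.
Proof.
  intros Hd H. destruct (Rle_or_lt x d); auto. exfalso. apply H.
  rewrite dk_eq; auto. rewrite kd_zero; auto. ring.
  apply Rmult_lt_reg_r with d; auto. unfold Rdiv. rewrite Rmult_assoc, Rinv_l by lra. lra.
Qed.

Lemma kd_nonneg kappa (Hk2 : C2 kappa) (Hk0 : forall x, 1 <= x -> kappa x = 0)
  (Hk' : forall x, x < 1 -> Derive kappa x < 0) d x : 0 <= kdelta kappa d x.
Proof. unfold kdelta. apply k_nonneg; auto. Qed.

Lemma kd_pos_arg kappa (Hk2 : C2 kappa) (Hk0 : forall x, 1 <= x -> kappa x = 0)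
  (Hk' : forall x, x < 1 -> Derive kappa x < 0) d x : 0 < d -> kdelta kappa d x < kappa 0 -> 0 < x.
Proof.
  unfold kdelta. intros Hd H. apply kpos_arg in H; auto.
  apply Rmult_lt_reg_r with (/d). apply Rinv_0_lt_compat; auto. rewrite Rmult_0_l. exact H.
Qed.

Lemma dk_cont_neg kappa (Hk2 : C2 kappa) d (g : R -> R) t : 0 < d ->
  (forall t, ex_derive g t) -> continuous (fun s => - dkdelta kappa d (g s)) t.
Proof.
  intros Hd Hg. apply (continuous_opp (fun s => dkdelta kappa d (g s))).
  apply dk_cont; auto.
Qed.

Lemma der_affine (f : R->R) c k x df v : is_derive f x df -> v = k*df -> is_derive (fun s => c + k * f s) x v.
Proof.
  intros H ->. auto_derive. exists df; exact H. change (fun x0 : R => f x0) with f. rewrite (is_derive_unique f x df H). ring.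
Qed.

Lemma vbound m v k0 : 0 < m -> m * (v * v) <= 2 * k0 -> Rabs (m * v) <= m + 2 * k0.
Proof.
  intros Hm H. assert (v <= 1 + v*v) by nra. assert (- v <= 1 + v*v) by nra.
  apply Rabs_le. split; nra.
Qed.

Ltac ext g Ho := let H := fresh in refine (ext_le g _ _ _ _ _ _);
     [apply exd_cont; auto_derive; repeat split; auto | eassumption | 
      intros ? H; let HH := fresh in pose proof (Ho _ H) as HH; decompose [and] HH; lra].

Theorem mainTheorem7
  (kappa : R -> R)
  (Hk2 : C2 kappa)
  (Hk0 : forall x, 1 <= x -> kappa x = 0)
  (Hk' : forall x, x < 1 -> Derive kappa x < 0)
  (m1 m2 : R) (Hm1 : 0 < m1) (Hm2 : 0 < m2)
  (Vset : R * R * R * R -> Prop) (A B Cc : R -> Prop)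
  (HVclosed : closed Vset)
  (HA : compact A) (HB : compact B) (HC : compact Cc)
  (HA01 : forall x, A x -> 0 < x < 1)
  (HC0 : forall E, Cc E -> 0 < E < kappa 0)
  (HV : forall X W E1 E2, Vset (X, W, E1, E2) -> A X /\ B W /\ Cc E1 /\ Cc E2)
  (T : R) (HT : 0 < T) :
  exists delta0 eps1 C, 0 < delta0 /\ 0 < eps1 /\ 0 < C /\
  forall delta eps, 0 < delta <= delta0 -> 0 < eps <= eps1 ->
  forall Xf Vf x1f v1f x2f v2f : R -> R,
  is_trajectory kappa m1 m2 (/ eps ^ 2) delta Xf Vf x1f v1f x2f v2f ->
  let h := fun t => slow kappa m1 m2 eps delta (Xf t) (Vf t) (x1f t) (v1f t) (x2f t) (v2f t) in
  Vset (h 0) ->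
  forall hbar : R -> R * R * R * R,
  hbar 0 = h 0 ->
  forall TT' TT, 0 <= TT' <= TT -> TT <= T / eps ->
  (forall tau, 0 <= tau < eps * TT -> is_derive hbar tau (Hbar kappa m1 m2 delta (hbar tau))) ->
  (* eps * TT <= T^delta_eps (the exit time, an infimum), unfolded: *)
  (forall tau, 0 <= tau < eps * TT -> Vset (hbar tau) /\ Vset (h (tau / eps))) ->
  let Hz := fun s => Hdelta kappa eps delta (Xf s) (Vf s) (x1f s) (v1f s) (x2f s) (v2f s) in
  Rabs (RInt (fun s => pr1 (Hz s)) TT' TT) <= C * Rmax 1 (TT - TT') /\
  Rabs (RInt (fun s => pr2 (Hz s)) TT' TT) <= C * Rmax 1 (TT - TT') /\
  Rabs (RInt (fun s => pr3 (Hz s)) TT' TT) <= C * Rmax 1 (TT - TT') /\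
  Rabs (RInt (fun s => pr4 (Hz s)) TT' TT) <= C * Rmax 1 (TT - TT').
Proof.
  destruct (compact_P2 A HA 0) as [e0 He0].
  { intros H0. apply HA01 in H0. lra. }
  destruct (compact_P2 A HA 1) as [e1 He1].
  { intros H0. apply HA01 in H0. lra. }
  set (a := Rmin (Rmin e0 e1) 1).
  assert (Ha : 0 < a).
  { unfold a. destruct e0 as [e0 p0]; destruct e1 as [e1 p1]; simpl.
    apply Rmin_glb_lt; [apply Rmin_glb_lt|]; lra. }
  assert (Ha1 : a <= 1) by apply Rmin_r.
  assert (HAa : forall x, A x -> a <= x <= 1 - a).
  { intros x Hx. pose proof (HA01 x Hx).
    assert (a <= e0) by (unfold a; eapply Rle_trans; [apply Rmin_l|apply Rmin_l]).
    assert (a <= e1) by (unfold a; eapply Rle_trans; [apply Rmin_l|apply Rmin_r]).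
    split.
    - destruct (Rle_or_lt e0 x). lra. exfalso. apply (He0 x); auto.
      unfold disc. rewrite Rminus_0_r, Rabs_right; lra.
    - destruct (Rle_or_lt x (1 - e1)). lra. exfalso. apply (He1 x); auto.
      unfold disc. rewrite Rabs_left; lra. }
  destruct (compact_P1 B HB) as [bm [bM HBb]].
  set (Bm := Rabs bm + Rabs bM).
  assert (HBm : forall w, B w -> - Bm <= w <= Bm).
  { intros w Hw. apply HBb in Hw. unfold Bm. 
    pose proof (Rle_abs bM). pose proof (Rle_abs (- bm)). rewrite Rabs_Ropp in H0.
    pose proof (Rabs_pos bm); pose proof (Rabs_pos bM). lra. }
  assert (HBm0 : 0 <= Bm) by (unfold Bm; pose proof (Rabs_pos bm); pose proof (Rabs_pos bM); lra).
  set (k0 := kappa 0).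
  assert (Hk00 : 0 <= k0) by (apply k_nonneg; auto).
  set (Pm := m1 + m2 + 2 * k0).
  set (G := (2 / a) * (2 * k0 + 3 * Pm)).
  assert (HG : 0 < G).
  { unfold G, Pm. apply Rmult_lt_0_compat. unfold Rdiv. apply Rmult_lt_0_compat. lra.
    apply Rinv_0_lt_compat; auto. lra. }
  exists (a / 4), 1, (1 + Bm + 2 * G + Bm * G).
  split. lra. split. lra. split. nra.
  intros delta eps Hdel Heps Xf Vf x1f v1f x2f v2f Htr h Hh0 hbar Hhb0 TT' TT HTT HTTT Hder Hin Hz.
  assert (Hd : 0 < delta) by lra.
  assert (exX : forall t, ex_derive Xf t) by (intros t; destruct (Htr t) as (H & _ & _ & _ & _ & _); eexists; exact H).
  assert (exV : forall t, ex_derive Vf t) by (intros t; destruct (Htr t) as (_ & H & _ & _ & _ & _); eexists; exact H).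
  assert (exx1 : forall t, ex_derive x1f t) by (intros t; destruct (Htr t) as (_ & _ & H & _ & _ & _); eexists; exact H).
  assert (exv1 : forall t, ex_derive v1f t) by (intros t; destruct (Htr t) as (_ & _ & _ & H & _ & _); eexists; exact H).
  assert (exx2 : forall t, ex_derive x2f t) by (intros t; destruct (Htr t) as (_ & _ & _ & _ & H & _); eexists; exact H).
  assert (exv2 : forall t, ex_derive v2f t) by (intros t; destruct (Htr t) as (_ & _ & _ & _ & _ & H); eexists; exact H).
  assert (Hopen : forall s, TT' <= s < TT ->
     a <= Xf s <= 1 - a /\ - Bm <= Vf s / eps <= Bm /\
     0 < x1f s /\ x1f s < Xf s /\ Xf s < x2f s /\ x2f s < 1 /\
     m1 * (v1f s * v1f s) <= 2 * k0 /\ m2 * (v2f s * v2f s) <= 2 * k0).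
  { intros s Hs. destruct (Hin (eps * s)) as [_ Hv].
    { split. apply Rmult_le_pos; lra. apply Rmult_lt_compat_l; lra. }
    replace (eps * s / eps) with s in Hv by (field; lra).
    unfold h, slow in Hv. apply HV in Hv. destruct Hv as (HAs & HBs & HC1 & HC2).
    apply HC0 in HC1; apply HC0 in HC2.
    pose proof (kd_nonneg kappa Hk2 Hk0 Hk' delta (x1f s)).
    pose proof (kd_nonneg kappa Hk2 Hk0 Hk' delta (Xf s - x1f s)).
    pose proof (kd_nonneg kappa Hk2 Hk0 Hk' delta (x2f s - Xf s)).
    pose proof (kd_nonneg kappa Hk2 Hk0 Hk' delta (1 - x2f s)).
    assert (0 <= m1 * (v1f s * v1f s)) by (apply Rmult_le_pos; [lra| apply Rle_0_sqr]).
    assert (0 <= m2 * (v2f s * v2f s)) by (apply Rmult_le_pos; [lra| apply Rle_0_sqr]).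
    replace (v1f s ^ 2) with (v1f s * v1f s) in HC1 by ring.
    replace (v2f s ^ 2) with (v2f s * v2f s) in HC2 by ring.
    fold k0 in HC1, HC2.
    assert (0 < x1f s).
    { apply (kd_pos_arg kappa Hk2 Hk0 Hk' delta); auto. fold k0. lra. }
    assert (0 < Xf s - x1f s).
    { apply (kd_pos_arg kappa Hk2 Hk0 Hk' delta); auto. fold k0. lra. }
    assert (0 < x2f s - Xf s).
    { apply (kd_pos_arg kappa Hk2 Hk0 Hk' delta); auto. fold k0. lra. }
    assert (0 < 1 - x2f s).
    { apply (kd_pos_arg kappa Hk2 Hk0 Hk' delta); auto. fold k0. lra. }
    pose proof (HAa _ HAs). pose proof (HBm _ HBs).
    clear HAs HBs Hin Hder Htr Hhb0 Hh0.
    repeat split; lra. }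
  destruct (Req_dec TT' TT) as [Heq|Hlt].
  { subst TT'. rewrite !RInt_point. unfold zero; simpl. rewrite Rabs_R0, Rminus_diag.
    assert (0 <= (1 + Bm + 2 * G + Bm * G) * Rmax 1 0).
    { apply Rmult_le_pos. nra. eapply Rle_trans; [|apply Rmax_l]; lra. }
    repeat split; lra. }
  assert (Hlt' : TT' < TT) by lra.
  assert (cg : forall (g : R -> R), (forall t, ex_derive g t) -> forall t, continuous g t).
  { intros g Hg t; apply exd_cont; auto. }
  assert (Hcl : forall s, TT' <= s <= TT ->
     a <= Xf s <= 1 - a /\ - Bm <= Vf s / eps <= Bm /\
     0 <= x1f s /\ x1f s <= Xf s /\ Xf s <= x2f s /\ x2f s <= 1 /\
     m1 * (v1f s * v1f s) <= 2 * k0 /\ m2 * (v2f s * v2f s) <= 2 * k0).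
  { intros s Hs. destruct (Rlt_or_le s TT) as [Hs'|Hs'].
    { pose proof (Hopen s (conj (proj1 Hs) Hs')) as HH; decompose [and] HH. repeat split; lra. }
    assert (s = TT) by lra. subst s.
    repeat split.
    - assert (- Xf TT <= - a). ext (fun s => - Xf s) Hopen. lra.
    - ext Xf Hopen.
    - assert (- (Vf TT / eps) <= Bm). ext (fun s => - (Vf s / eps)) Hopen. lra.
    - ext (fun s => Vf s / eps) Hopen.
    - assert (- x1f TT <= 0). ext (fun s => - x1f s) Hopen. lra.
    - assert (x1f TT - Xf TT <= 0). ext (fun s => x1f s - Xf s) Hopen. lra.
    - assert (Xf TT - x2f TT <= 0). ext (fun s => Xf s - x2f s) Hopen. lra.
    - ext x2f Hopen.
    - ext (fun s => m1 * (v1f s * v1f s)) Hopen.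
    - ext (fun s => m2 * (v2f s * v2f s)) Hopen. }
  pose (Fp1 := fun s => - dkdelta kappa delta (Xf s - x1f s)).
  pose (Fw1 := fun s => - dkdelta kappa delta (x1f s)).
  pose (Fp2 := fun s => - dkdelta kappa delta (x2f s - Xf s)).
  pose (Fw2 := fun s => - dkdelta kappa delta (1 - x2f s)).
  assert (cFp1 : forall t, continuous Fp1 t).
  { intros t; apply dk_cont_neg; auto. intros; auto_derive; auto. }
  assert (cFw1 : forall t, continuous Fw1 t).
  { intros t; apply dk_cont_neg; auto. }
  assert (cFp2 : forall t, continuous Fp2 t).
  { intros t; apply dk_cont_neg; auto. intros; auto_derive; auto. }
  assert (cFw2 : forall t, continuous Fw2 t).
  { intros t; apply dk_cont_neg; auto. intros; auto_derive; auto. }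
  pose proof (dk_nonpos kappa Hk2 Hk0 Hk' delta) as dnp.
  pose proof (dk_supp kappa Hk2 Hk0 delta) as dsp.
  destruct (core (fun s => m1 * v1f s) x1f v1f Fp1 Fw1 TT' TT a delta (m1 + 2*k0) 1 (2*k0))
    as [C1a C1b].
  { lra. } { lra. } { lra. } { auto. } { auto. }
  { intros t; apply exd_cont; auto_derive; auto. }
  { intros t; apply exd_cont; auto. }
  { intros t; apply exd_cont; auto. }
  { intros t. destruct (Htr t) as (_ & _ & _ & D & _ & _).
    eapply der_scale. exact D. unfold Fw1, Fp1. field. lra. }
  { intros t. destruct (Htr t) as (_ & _ & D & _ & _ & _). exact D. }
  { intros t Ht. pose proof (Hcl t Ht) as HH; decompose [and] HH. unfold Fp1, Fw1.
    pose proof (dnp (Xf t - x1f t) Hd). pose proof (dnp (x1f t) Hd).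
    repeat split; try lra.
    - intros Hne. assert (Xf t - x1f t <= delta) by (apply dsp; auto; lra). lra.
    - intros Hne. apply dsp; auto; lra.
    - apply vbound; auto.
    - rewrite Rabs_right; lra.
    all: nra. }
  destruct (core (fun s => (-m2) * v2f s) (fun s => 1 + (-1) * x2f s) (fun s => - v2f s) Fp2 Fw2 TT' TT a delta (m2 + 2*k0) 1 (2*k0))
    as [C2a C2b].
  { lra. } { lra. } { lra. } { auto. } { auto. }
  { intros t; apply exd_cont; auto_derive; auto. }
  { intros t; apply exd_cont; auto_derive; auto. }
  { intros t; apply exd_cont; auto_derive; auto. }
  { intros t. destruct (Htr t) as (_ & _ & _ & _ & _ & D).
    eapply der_scale. exact D. unfold Fw2, Fp2. field. lra. }
  { intros t. destruct (Htr t) as (_ & _ & _ & _ & D & _). eapply der_affine. exact D. ring. }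
  { intros t Ht. pose proof (Hcl t Ht) as HH; decompose [and] HH. unfold Fp2, Fw2.
    pose proof (dnp (x2f t - Xf t) Hd). pose proof (dnp (1 - x2f t) Hd).
    repeat split; try lra.
    - intros Hne. assert (x2f t - Xf t <= delta) by (apply dsp; auto; lra). lra.
    - intros Hne. assert (1 - x2f t <= delta) by (apply dsp; auto; lra). lra.
    - replace (- m2 * v2f t) with (m2 * (- v2f t)) by ring. apply vbound; auto. nra.
    - rewrite Rabs_right; lra.
    all: nra. }
  set (M := Rmax 1 (TT - TT')).
  assert (HM1 : 1 <= M) by apply Rmax_l.
  assert (HML : TT - TT' <= M) by apply Rmax_r.
  assert (Hd4 : delta <= 1/4) by lra.
  assert (HPm : 0 <= Pm) by (unfold Pm; lra).
  assert (Hfin : forall I m, 0 < m -> m + 2 * k0 <= Pm -> (a/2) * I <= 2*k0*(TT-TT') + 2*delta*(m+2*k0) + 2*(m+2*k0)*1 -> I <= G * M).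
  { intros I m Hm HmP HI.
    assert (H2 : (a/2) * I <= (2*k0 + 3*Pm) * M).
    { eapply Rle_trans. exact HI. nra. }
    replace I with ((2/a) * ((a/2) * I)) by (field; lra).
    unfold G. rewrite Rmult_assoc. apply Rmult_le_compat_l.
    { unfold Rdiv. apply Rmult_le_pos. lra. left; apply Rinv_0_lt_compat; auto. }
    exact H2. }
  assert (B1 : RInt Fp1 TT' TT <= G * M) by (apply (Hfin _ m1); auto; unfold Pm; lra).
  assert (B2 : RInt Fp2 TT' TT <= G * M) by (apply (Hfin _ m2); auto; unfold Pm; lra).
  assert (cW : forall t, continuous (fun s => Vf s / eps) t).
  { intros t; apply exd_cont; auto_derive; auto. }
  assert (HCM : (1 + Bm + 2 * G + Bm * G) * M = M + Bm * M + 2 * (G * M) + Bm * (G * M)) by ring.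
  assert (0 <= Bm * M) by nra.
  assert (0 <= Bm * (G * M)) by nra.
  assert (0 <= G * M) by nra.
  split; [|split; [|split]].
  -
    rewrite (RInt_ext (fun s => pr1 (Hz s)) (fun s => Vf s / eps)) by (intros; reflexivity).
    eapply Rle_trans. apply abs_RInt_le. lra. apply exR; auto.
    assert (RInt (fun t => Rabs (Vf t / eps)) TT' TT <= RInt (fun _ => Bm) TT' TT).
    { apply RInt_le. lra. apply exR. intros t; apply (continuous_comp (fun s => Vf s / eps) Rabs); auto.
      apply continuous_Rabs. apply (@ex_RInt_const R_NormedModule).
      intros t Ht. pose proof (Hcl t ltac:(lra)) as HH; decompose [and] HH. apply Rabs_le; lra. }
    rewrite RInt_const in H2. unfold scal in H2; simpl in H2; unfold mult in H2; simpl in H2.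
    assert (Bm * (TT - TT') <= Bm * M) by nra. nra.
  -
    rewrite (RInt_ext (fun s => pr2 (Hz s)) (fun s => minus (Fp1 s) (Fp2 s)))
      by (intros; unfold Hz, Hdelta, pr2, Fp1, Fp2, minus, plus, opp; simpl; ring).
    rewrite (@RInt_minus R_CompleteNormedModule) by (apply exR; auto).
    unfold minus, plus, opp; simpl.
    apply Rabs_le. lra.
  -
    rewrite (RInt_ext (fun s => pr3 (Hz s)) (fun s => (Vf s / eps) * dkdelta kappa delta (Xf s - x1f s))) by (intros; reflexivity).
    eapply Rle_trans. apply abs_RInt_le. lra. apply exR; intros t.
    apply (continuous_mult (fun s => Vf s / eps) (fun s => dkdelta kappa delta (Xf s - x1f s))); auto.
    apply dk_cont; auto. intros; auto_derive; auto.
    assert (RInt (fun t => Rabs (Vf t / eps * dkdelta kappa delta (Xf t - x1f t))) TT' TT <= RInt (fun t => scal Bm (Fp1 t)) TT' TT).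
    { apply RInt_le. lra. apply exR. intros t.
      apply (continuous_comp (fun s => Vf s / eps * dkdelta kappa delta (Xf s - x1f s)) Rabs); auto.
      apply (continuous_mult (fun s => Vf s / eps) (fun s => dkdelta kappa delta (Xf s - x1f s))); auto.
      apply dk_cont; auto. intros; auto_derive; auto.
      apply continuous_Rabs. apply (@ex_RInt_scal R_NormedModule). apply exR; auto.
      intros t Ht. pose proof (Hcl t ltac:(lra)) as HH; decompose [and] HH.
      rewrite Rabs_mult. unfold scal; simpl; unfold mult; simpl. unfold Fp1.
      pose proof (dnp (Xf t - x1f t) Hd).
      rewrite (Rabs_left1 (dkdelta _ _ _)) by lra.
      apply Rmult_le_compat_r. lra. apply Rabs_le; lra. }
    rewrite (@RInt_scal R_CompleteNormedModule) in H2 by (apply exR; auto).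
    unfold scal in H2; simpl in H2; unfold mult in H2; simpl in H2.
    assert (Bm * RInt Fp1 TT' TT <= Bm * (G * M)) by (apply Rmult_le_compat_l; auto). lra.
  -
    rewrite (RInt_ext (fun s => pr4 (Hz s)) (fun s => - (Vf s / eps) * dkdelta kappa delta (x2f s - Xf s))) by (intros; reflexivity).
    assert (cm : forall t, continuous (fun s => - (Vf s / eps) * dkdelta kappa delta (x2f s - Xf s)) t).
    { intros t. apply (continuous_mult (fun s => - (Vf s / eps)) (fun s => dkdelta kappa delta (x2f s - Xf s))); auto.
      apply exd_cont; auto_derive; auto.
      apply dk_cont; auto. intros; auto_derive; auto. }
    eapply Rle_trans. apply abs_RInt_le. lra. apply exR; auto.
    assert (RInt (fun t => Rabs (- (Vf t / eps) * dkdelta kappa delta (x2f t - Xf t))) TT' TT <= RInt (fun t => scal Bm (Fp2 t)) TT' TT).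
    { apply RInt_le. lra. apply exR. intros t.
      apply (continuous_comp (fun s => - (Vf s / eps) * dkdelta kappa delta (x2f s - Xf s)) Rabs); auto.
      apply continuous_Rabs. apply (@ex_RInt_scal R_NormedModule). apply exR; auto.
      intros t Ht. pose proof (Hcl t ltac:(lra)) as HH; decompose [and] HH.
      rewrite Rabs_mult. unfold scal; simpl; unfold mult; simpl. unfold Fp2.
      pose proof (dnp (x2f t - Xf t) Hd).
      rewrite (Rabs_left1 (dkdelta _ _ _)) by lra.
      apply Rmult_le_compat_r. lra. rewrite Rabs_Ropp. apply Rabs_le; lra. }
    rewrite (@RInt_scal R_CompleteNormedModule) in H2 by (apply exR; auto).
    unfold scal in H2; simpl in H2; unfold mult in H2; simpl in H2.
    assert (Bm * RInt Fp2 TT' TT <= Bm * (G * M)) by (apply Rmult_le_compat_l; auto). lra.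
Qed.
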